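(* In the online tolling setting described in the context, let the tolls be generated by $\boldsymbol{\tau}^{(1)}=\bm{0}$ and $\boldsymbol{\tau}^{(t+1)}=(\boldsymbol{\tau}^{(t)}-\gamma(\bm{c}-\bm{x}^t))_+$ (componentwise positive part), where $\bm{x}^t$ are the equilibrium edge flows under $\boldsymbol{\tau}^{(t)}$, with a step size $0<\gamma\le1$. Then for every edge $e\in E$ and every period $t$, $$\tau^{(t)}_e\le\max_{u\in\mathcal{U}}\lambda_u+\max_{e'\in E}c_{e'}+|\mathcal{U}|.$$
   Context: Network: directed graph $G=(V,E)$, edge capacities $c_e\ge0$, fixed edge travel times $l_e\ge0$. Finite user set $\mathcal{U}$; user $u$ has fixed outside-option cost $\lambda_u\ge0$. In each period $t$, O-D pairs $w^t_u$ and values of time $v^t_u\ge0$ are drawn i.i.d. across periods from a distribution $\mathcal{D}$; $\mathcal{P}^t_u$ is the finite set of paths for $w^t_u$. Given tolls $\boldsymbol{\tau}^{(t)}$, the period-$t$ equilibrium assigns each user to a path $P\in\mathcal{P}^t_u$ or the outside option so as to minimize cost ($v^t_u\sum_{e\in P}l_e+\sum_{e\in P}\tau^{(t)}_e$ for a path, $\lambda_u$ for the outside option; capacities need not be respected), with edge flows $x^t_e$ equal to the number of users whose chosen path contains $e$. *)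

(* Defs.v *)
From HB Require Import structures.
From mathcomp Require Import all_boot all_order all_algebra.
Set Implicit Arguments. Unset Strict Implicit. Unset Printing Implicit Defensive.
Import Order.TTheory GRing.Theory Num.Theory.
Local Open Scope ring_scope.

Definition is_path (V E : finType) (src dst : E -> V) (o d : V) (p : seq E) : bool :=
  match p with
  | [::] => false
  | e0 :: _ =>
      [&& src e0 == o,
          dst (last e0 p) == d,
          path (fun e f => dst e == src f) e0 (behead p)
        & uniq (src e0 :: map dst p)]
  end.

Definition path_cost (R : numDomainType) (E : finType) (l : E -> R) (v : R)
  (tau : E -> R) (P : seq E) : R :=
  v * (\sum_(e <- P) l e) + \sum_(e <- P) tau e.

(* Cost of a choice: [None] = outside option (cost lambda), [Some P] = path P. *)
Definition choice_cost (R : numDomainType) (E : finType) (l : E -> R) (v lam : R)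
  (tau : E -> R) (ch : option (seq E)) : R :=
  if ch is Some P then path_cost l v tau P else lam.

(* [ch] is an equilibrium assignment given available paths [paths u],
   values of time [v u], outside options [lam u] and tolls [tau]:
   each user picks a feasible option of minimal cost
   (capacities are not enforced). *)
Definition is_equilibrium (R : numDomainType) (E U : finType) (l : E -> R)
  (lam v : U -> R) (paths : U -> seq (seq E)) (tau : E -> R)
  (ch : U -> option (seq E)) : Prop :=
  forall u,
    (if ch u is Some P then P \in paths u else true) /\
    choice_cost l (v u) (lam u) tau (ch u) <= lam u /\
    (forall P, P \in paths u -> choice_cost l (v u) (lam u) tau (ch u) <= path_cost l (v u) tau P).

Definition edge_flow (R : numDomainType) (E U : finType) (ch : U -> option (seq E)) (e : E) : R :=
  (#|[set u | if ch u is Some P then e \in P else false]|)%:R.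

(* Main.v *)
Require Import Defs.
From HB Require Import structures.
From mathcomp Require Import all_boot all_order all_algebra.
From mathcomp Require Import lra.
Import Order.TTheory GRing.Theory Num.Theory.
Local Open Scope ring_scope.

(* Periods are indexed from 0: tau 0 is tau^(1), OD t / vt t / ch t are the
   draws and equilibrium of the corresponding period. *)
Theorem lemma4 (R : realFieldType) (V E U : finType) (src dst : E -> V)
  (c l : E -> R) (lam : U -> R)
  (Paths : V -> V -> seq (seq E))
  (OD : nat -> U -> (V * V)%type) (vt : nat -> U -> R)
  (gamma : R) (tau : nat -> E -> R) (ch : nat -> U -> option (seq E))
  (hc : forall e, 0 <= c e) (hl : forall e, 0 <= l e) (hlam : forall u, 0 <= lam u)
  (hPaths : forall o d P, P \in Paths o d -> is_path src dst o d P)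
  (hvt : forall t u, 0 <= vt t u)
  (hgamma0 : 0 < gamma) (hgamma1 : gamma <= 1)
  (htau0 : forall e, tau 0%N e = 0)
  (heq : forall t, is_equilibrium l lam (vt t)
                     (fun u => Paths (OD t u).1 (OD t u).2) (tau t) (ch t))
  (hupd : forall t e, tau t.+1 e =
            Num.max 0 (tau t e - gamma * (c e - edge_flow R (ch t) e))) :
  forall t e,
    tau t e <= \big[Num.max/0]_(u : U) lam u + \big[Num.max/0]_(e' : E) c e' + (#|U|)%:R.
Proof.
set L := \big[Num.max/0]_(u : U) lam u.
set C := \big[Num.max/0]_(e' : E) c e'.
have hL : forall u, lam u <= L by move=> u; exact: le_bigmax.
have hL0 : 0 <= L by apply: bigmax_ge_id.
have hC0 : 0 <= C by apply: bigmax_ge_id.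
have hpos : forall t e, 0 <= tau t e.
  by case=> [|t] e; rewrite ?htau0 // hupd le_max lexx.
have hflow0 : forall t e, (0:R) <= edge_flow R (ch t) e by move=> t e; exact: ler0n.
have hflowN : forall t e, edge_flow R (ch t) e <= (#|U|)%:R.
  by move=> t e; rewrite /edge_flow ler_nat max_card.
have huse : forall t e, L < tau t e -> edge_flow R (ch t) e = 0.
  move=> t e hlt; rewrite /edge_flow.
  suff -> : [set u | if ch t u is Some P then e \in P else false] = set0 by rewrite cards0.
  apply/setP=> u; rewrite !inE.
  case hch: (ch t u) => [P|] //.
  apply/negP=> heP.
  have [_ [hle _]] := heq t u.
  rewrite hch /= /path_cost in hle.
  have h1 : tau t e <= \sum_(e0 <- P) tau t e0.
    rewrite (big_rem _ heP) /= lerDl.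
    by apply: sumr_ge0 => i _; apply: hpos.
  have h2 : 0 <= vt t u * \sum_(e0 <- P) l e0.
    by apply: mulr_ge0 => //; apply: sumr_ge0.
  have : tau t e < tau t e.
    apply: (le_lt_trans _ hlt); apply: (le_trans h1).
    apply: le_trans (hL u); apply: le_trans hle.
    by rewrite lerDr.
  by rewrite ltxx.
suff main : forall t e, tau t e <= L + (#|U|)%:R.
  move=> t e; apply: (le_trans (main t e)).
  by rewrite -addrA lerD2l lerDr.
elim=> [|t IH] e.
  by rewrite htau0 addr_ge0.
rewrite hupd ge_max addr_ge0 //=.
have [hle|hlt] := leP (tau t e) L.
  have := hflowN t e; have := hflow0 t e; have := hc e.
  set x := edge_flow R (ch t) e => hc' hx0 hxN.
  have : gamma * x <= x by rewrite ler_piMl.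
  have : 0 <= gamma * c e by rewrite mulr_ge0 // ltW.
  rewrite mulrBr.
  move=> h1 h2.
  have h3 := le_trans h2 hxN.
  move: h1 h3 hle; rewrite /x.
  move: (gamma * c e) (gamma * edge_flow R (ch t) e) (tau t e) => a b y.
  move=> ha hb hy; lra.
rewrite huse // subr0.
apply: le_trans (IH e).
by rewrite lerBlDr lerDl mulr_ge0 // ltW.
Qed.
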